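(* In the Riemann problem setting of the context, assume the initial data generate a left shock and a right shock, i.e. $p_*>p_L$ and $p_*>p_R$. Then for all $K,M\in\{L,R\}$: $$|u_*-u_K|<|[\![u]\!]|,\qquad0<p_*-p_K<\big(\gamma\rho_K|[\![u]\!]|+\rho_Ka_K\big)|[\![u]\!]|,$$ $$|\rho_{*K}-\rho_M|<a_K^{-2}\big(\gamma\rho_K|[\![u]\!]|+\rho_Ka_K\big)|[\![u]\!]|+|[\![\rho]\!]|.$$
   Context: Let $\gamma\in(1,2]$. Consider the one-dimensional Riemann problem for the complete Euler equations with left and right primitive states $V_K=(\rho_K,u_K,p_K)$, $\rho_K,p_K>0$, $K=L,R$, sound speeds $a_K=\sqrt{\gamma p_K/\rho_K}$, and jumps $[\![\rho]\!]=\rho_R-\rho_L$, $[\![u]\!]=u_R-u_L$, $[\![p]\!]=p_R-p_L$. For $K=L,R$ define $f_K(p)=(p-p_K)\big(\frac{A_K}{p+B_K}\big)^{1/2}$ if $p>p_K$ and $f_K(p)=\frac{2a_K}{\gamma-1}\big[(p/p_K)^{\frac{\gamma-1}{2\gamma}}-1\big]$ if $p\le p_K$, with $A_K=\frac2{(\gamma+1)\rho_K}$, $B_K=\frac{\gamma-1}{\gamma+1}p_K$. The star pressure $p_*$ solves $f_L(p_* )+f_R(p_* )+u_R-u_L=0$ and $u_*=u_L-f_L(p_* )=u_R+f_R(p_* )$. The $K$-wave is a rarefaction if $p_*\le p_K$, a shock if $p_*>p_K$. The density on the $K$-side of the contact is $\rho_{*K}=\rho_K(p_*/p_K)^{1/\gamma}$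 for a rarefaction and $\rho_{*K}=\rho_K\frac{p_*/p_K+\frac{\gamma-1}{\gamma+1}}{\frac{\gamma-1}{\gamma+1}p_*/p_K+1}$ for a shock. *)

(* Defs.v *)
From Stdlib Require Import Reals.
Open Scope R_scope.

Record state := mkState { rho : R; vel : R; pres : R }.

Inductive side := Lside | Rside.

Definition pick (K : side) (VL VR : state) : state :=
  match K with Lside => VL | Rside => VR end.

Definition sound (gamma : R) (V : state) : R := sqrt (gamma * pres V / rho V).

Definition Acoef (gamma : R) (V : state) : R := 2 / ((gamma + 1) * rho V).
Definition Bcoef (gamma : R) (V : state) : R := (gamma - 1) / (gamma + 1) * pres V.

(* Toro's pressure function f_K *)
Definition fK (gamma : R) (V : state) (p : R) : R :=
  if Rlt_dec (pres V) p
  then (p - pres V) * sqrt (Acoef gamma V / (p + Bcoef gamma V))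
  else 2 * sound gamma V / (gamma - 1) *
       (Rpower (p / pres V) ((gamma - 1) / (2 * gamma)) - 1).

(* density on the K-side of the contact *)
Definition rho_star (gamma : R) (V : state) (pstar : R) : R :=
  if Rle_dec pstar (pres V)
  then rho V * Rpower (pstar / pres V) (1 / gamma)
  else rho V * (pstar / pres V + (gamma - 1) / (gamma + 1)) /
       ((gamma - 1) / (gamma + 1) * (pstar / pres V) + 1).

(* Main.v *)
Require Import Defs.
From Stdlib Require Import Reals Lra Psatz.
Open Scope R_scope.

Lemma fK_shock gamma V ps : pres V < ps ->
  fK gamma V ps = (ps - pres V) * sqrt (Acoef gamma V / (ps + Bcoef gamma V)).
Proof. intro H; unfold fK; destruct (Rlt_dec (pres V) ps); [reflexivity|lra]. Qed.

Lemma side_lemma gamma V ps F : 1 < gamma <= 2 -> 0 < rho V -> 0 < pres V ->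
  pres V < ps -> fK gamma V ps < F ->
  0 < fK gamma V ps /\
  ps - pres V < (gamma * rho V * F + rho V * sound gamma V) * F /\
  0 < rho_star gamma V ps - rho V /\
  rho_star gamma V ps - rho V <
    / (sound gamma V ^ 2) * ((gamma * rho V * F + rho V * sound gamma V) * F).
Proof.
  intros Hg Hr Hp Hps HF.
  rewrite fK_shock in HF |- * by exact Hps.
  set (x := ps - pres V).
  set (p := pres V) in *. set (r := rho V) in *.
  assert (Hx : 0 < x) by (unfold x; lra).
  assert (HB : 0 < ps + Bcoef gamma V).
  { unfold Bcoef; fold p.
    assert (0 < (gamma - 1) / (gamma + 1) * p).
    { apply Rmult_lt_0_compat; [apply Rdiv_lt_0_compat|]; lra. }
    lra. }
  assert (HD : 0 < (gamma + 1) * r * (ps + Bcoef gamma V)).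
  { apply Rmult_lt_0_compat; [apply Rmult_lt_0_compat|]; lra. }
  set (D := (gamma + 1) * r * (ps + Bcoef gamma V)) in *.
  assert (HDe : D = r * ((gamma + 1) * x + 2 * gamma * p)).
  { unfold D, Bcoef, x; fold p. field. lra. }
  set (q := sqrt (Acoef gamma V / (ps + Bcoef gamma V))).
  assert (HAB : 0 < Acoef gamma V / (ps + Bcoef gamma V)).
  { unfold Acoef. fold r.
    replace (2 / ((gamma + 1) * r) / (ps + Bcoef gamma V)) with (2 / D).
    apply Rdiv_lt_0_compat; lra. unfold D. field. repeat split; lra. }
  assert (Hq : 0 < q) by (apply sqrt_lt_R0; exact HAB).
  assert (Hq2 : q * q * D = 2).
  { unfold q. rewrite sqrt_sqrt by lra. unfold Acoef, D; fold r. field.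
    repeat split; lra. }
  set (a := sound gamma V).
  assert (Ha2 : a * a * r = gamma * p).
  { unfold a, sound. rewrite sqrt_sqrt. fold p r. field. lra.
    fold p r. apply Rlt_le, Rdiv_lt_0_compat; nra. }
  assert (Ha : 0 < a).
  { unfold a, sound. apply sqrt_lt_R0. fold p r. apply Rdiv_lt_0_compat; nra. }
  assert (Hfk : 0 < x * q) by nra.
  assert (Hkey : 1 <= gamma * r * x * (q * q) + r * a * q).
  { set (t := r * a * q).
    assert (Ht2 : t * t = r * gamma * p * (q * q)).
    { unfold t. replace (r * a * q * (r * a * q)) with (r * (a * a * r) * (q * q)) by ring.
      rewrite Ha2. ring. }
    assert (Ht : 0 <= t) by (unfold t; apply Rmult_le_pos; [apply Rmult_le_pos|]; lra).
    assert (Hm : 1 <= gamma * r * (x + p) * (q * q)).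
    { assert (0 <= r * ((gamma - 1) * x)).
      { apply Rmult_le_pos; [|apply Rmult_le_pos]; lra. }
      assert (2 * gamma * r * (x + p) >= D) by (rewrite HDe; lra).
      assert (0 <= q * q) by nra.
      assert (2 * gamma * r * (x + p) * (q * q) >= D * (q * q)) by nra.
      lra. }
    destruct (Rle_lt_dec 1 t). nra. nra. }
  assert (Hbound : x < (gamma * r * F + r * a) * F).
  { assert (x <= gamma * r * (x * q) * (x * q) + r * a * (x * q)) by nra.
    set (y := x * q) in *.
    assert (0 < gamma * r) by nra.
    change (y < F) in HF. assert (y * y < F * F) by nra.
    assert (gamma * r * (y * y) < gamma * r * (F * F)) by (apply Rmult_lt_compat_l; lra).
    assert (0 < r * a) by nra.
    assert (r * a * y < r * a * F) by (apply Rmult_lt_compat_l; lra).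
    nra. }
  split; [exact Hfk|]. split; [exact Hbound|].
  assert (Hrs : rho_star gamma V ps - r =
     r * (2 / (gamma + 1)) * x / ((gamma - 1) / (gamma + 1) * ps + p)).
  { unfold rho_star. destruct (Rle_dec ps (pres V)); [fold p in r0; lra|].
    fold p r. unfold x.
    assert (0 < (gamma - 1) / (gamma + 1)) by (apply Rdiv_lt_0_compat; lra).
    assert (0 < (gamma - 1) / (gamma + 1) * ps) by (apply Rmult_lt_0_compat; lra).
    assert (0 < (gamma - 1) / (gamma + 1) * (ps / p)).
    { apply Rmult_lt_0_compat; [lra|]. apply Rdiv_lt_0_compat; lra. }
    assert (0 < (gamma - 1) * ps) by nra.
    field. repeat split; intro Hc; nra. }
  assert (Hden : 2 * gamma / (gamma + 1) * p < (gamma - 1) / (gamma + 1) * ps + p).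
  { apply (Rmult_lt_reg_r (gamma + 1)); [lra|].
    replace (2 * gamma / (gamma + 1) * p * (gamma + 1)) with (2 * gamma * p) by (field; lra).
    replace (((gamma - 1) / (gamma + 1) * ps + p) * (gamma + 1)) with
      ((gamma - 1) * ps + (gamma + 1) * p) by (field; lra). nra. }
  set (E := (gamma - 1) / (gamma + 1) * ps + p) in *.
  assert (HE : 0 < E).
  { assert (0 < 2 * gamma / (gamma + 1) * p).
    { apply Rmult_lt_0_compat; [apply Rdiv_lt_0_compat|]; lra. } lra. }
  rewrite Hrs. split.
  - apply Rdiv_lt_0_compat; [|exact HE].
    apply Rmult_lt_0_compat; [apply Rmult_lt_0_compat|]; try lra.
    apply Rdiv_lt_0_compat; lra.
  - assert (Hgp : 0 < gamma * p) by (apply Rmult_lt_0_compat; lra).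
    assert (Haa : 0 < a * a) by (apply Rmult_lt_0_compat; lra).
    assert (Hrx : 0 < r * x) by (apply Rmult_lt_0_compat; lra).
    assert (HE2 : 2 * gamma * p < E * (gamma + 1)).
    { replace (2 * gamma * p) with (2 * gamma / (gamma + 1) * p * (gamma + 1)) by (field; lra).
      apply Rmult_lt_compat_r; lra. }
    assert (Hlt : r * (2 / (gamma + 1)) * x / E < x / (a * a)).
    { replace (x / (a * a)) with ((r * x) * / (gamma * p)).
      2: { rewrite <- Ha2. field. split; apply Rgt_not_eq; lra. }
      replace (r * (2 / (gamma + 1)) * x / E) with ((r * x) * / ((gamma + 1) * E / 2)).
      2: { field. split; apply Rgt_not_eq; lra. }
      apply Rmult_lt_compat_l; [lra|].
      apply Rinv_lt_contravar.
      - apply Rmult_lt_0_compat; [lra|]. apply Rdiv_lt_0_compat; [|lra].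
        apply Rmult_lt_0_compat; lra.
      - lra. }
    apply Rlt_le_trans with (1 := Hlt).
    replace (a ^ 2) with (a * a) by ring.
    unfold Rdiv. rewrite Rmult_comm. apply Rmult_le_compat_l.
    + apply Rlt_le, Rinv_0_lt_compat. lra.
    + lra.
Qed.

Theorem lemma3p5 (gamma : R) (VL VR : state) (pstar : R) :
  1 < gamma <= 2 ->
  0 < rho VL -> 0 < pres VL -> 0 < rho VR -> 0 < pres VR ->
  fK gamma VL pstar + fK gamma VR pstar + vel VR - vel VL = 0 ->
  pstar > pres VL -> pstar > pres VR ->
  let ustar := vel VL - fK gamma VL pstar in
  let du := vel VR - vel VL in
  let drho := rho VR - rho VL in
  forall K M : side,
    let VK := pick K VL VR in
    let VM := pick M VL VR in
    let bound := (gamma * rho VK * Rabs du + rho VK * sound gamma VK) * Rabs du in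
    Rabs (ustar - vel VK) < Rabs du /\
    0 < pstar - pres VK /\ pstar - pres VK < bound /\
    Rabs (rho_star gamma VK pstar - rho VM) < / (sound gamma VK ^ 2) * bound + Rabs drho.
Proof.
  intros Hg HrL HpL HrR HpR Heq HL HR ustar du drho K M VK VM bound.
  assert (fL0 : 0 < fK gamma VL pstar).
  { rewrite fK_shock by lra. apply Rmult_lt_0_compat; [lra|].
    apply sqrt_lt_R0. unfold Acoef, Bcoef.
    apply Rdiv_lt_0_compat; [apply Rdiv_lt_0_compat; nra|].
    assert (0 <= (gamma - 1) / (gamma + 1) * pres VL).
    { apply Rmult_le_pos; [apply Rlt_le, Rdiv_lt_0_compat|]; lra. } lra. }
  assert (fR0 : 0 < fK gamma VR pstar).
  { rewrite fK_shock by lra. apply Rmult_lt_0_compat; [lra|].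
    apply sqrt_lt_R0. unfold Acoef, Bcoef.
    apply Rdiv_lt_0_compat; [apply Rdiv_lt_0_compat; nra|].
    assert (0 <= (gamma - 1) / (gamma + 1) * pres VR).
    { apply Rmult_le_pos; [apply Rlt_le, Rdiv_lt_0_compat|]; lra. } lra. }
  assert (Hdu : Rabs du = fK gamma VL pstar + fK gamma VR pstar).
  { unfold du. rewrite Rabs_left by lra. lra. }
  assert (Hsd : forall V, (V = VL \/ V = VR) ->
     0 < rho V /\ 0 < pres V /\ pres V < pstar /\ fK gamma V pstar < Rabs du).
  { intros V [-> | ->]; repeat split; lra. }
  assert (HK : VK = VL \/ VK = VR) by (unfold VK; destruct K; auto).
  destruct (Hsd VK HK) as (H1 & H2 & H3 & H4).
  destruct (side_lemma gamma VK pstar (Rabs du) Hg H1 H2 H3 H4) as (S1 & S2 & S3 & S4).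
  split; [|split; [lra|split; [exact S2|]]].
  - unfold ustar. destruct K; simpl in *; unfold VK; simpl.
    + rewrite Rabs_left by lra. lra.
    + rewrite Rabs_right by lra. lra.
  - assert (HKM : Rabs (rho VK - rho VM) <= Rabs drho).
    { unfold VK, VM, drho; destruct K, M; simpl;
        try (rewrite Rminus_diag, Rabs_R0; apply Rabs_pos).
      - rewrite <- Rabs_Ropp. right; f_equal; ring.
      - right; reflexivity. }
    replace (rho_star gamma VK pstar - rho VM) with
      ((rho_star gamma VK pstar - rho VK) + (rho VK - rho VM)) by ring.
    eapply Rle_lt_trans; [apply Rabs_triang|].
    rewrite (Rabs_right (rho_star gamma VK pstar - rho VK)) by lra.
    unfold bound. lra.
Qed.
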